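(* Let $G$ be a group and $A\subseteq G$ a nonempty finite set. (a) For any nonempty finite $B\subseteq G$: $\operatorname{VC}^\ell_B(A)=0$ iff $|BA|=|A|$, and $\operatorname{VC}^r_B(A)=0$ iff $|AB|=|A|$. (b) The following are equivalent: (i) $\operatorname{VC}^\ell_{A^{-1}}(A)=0$; (ii) $\operatorname{VC}^r_{A^{-1}}(A)=0$; (iii) $|AA^{-1}|=|A|$; (iv) $|A^{-1}A|=|A|$; (v) $A$ is a coset of a subgroup of $G$. (c) The following are equivalent: (i) $\operatorname{VC}^\ell_A(A)=0$; (ii) $\operatorname{VC}^r_A(A)=0$; (iii) $|AA|=|A|$; (iv) $A=aH$ for some subgroup $H\leq G$ and $a\in G$ with $aH=Ha$.
   Context: $AB=\{ab\}$, $A^{-1}=\{a^{-1}\}$. A set system $\mathcal F$ on $X$ shatters $Y\subseteq X$ if $\{Y\cap S:S\in\mathcal F\}$ is the power set of $Y$; $\operatorname{VC}(\mathcal F)$ is the maximum size of a finite shattered set (so the empty set is shattered by any nonempty system). $\operatorname{VC}^\ell_B(A)=\operatorname{VC}(\{xA:x\in B\})$, $\operatorname{VC}^r_B(A)=\operatorname{VC}(\{Ax:x\in B\})$. *)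

(* Defs.v *)
From HB Require Import structures.
From mathcomp Require Import all_boot.
From mathcomp Require Import finmap.
Set Implicit Arguments. Unset Strict Implicit. Unset Printing Implicit Defensive.
Local Open Scope fset_scope.
Local Open Scope group_scope.

Section Defs.
Variable G : groupType.

Definition lmul (x : G) (A : {fset G}) : {fset G} := [fset x * a | a in A].
Definition rmul (A : {fset G}) (x : G) : {fset G} := [fset a * x | a in A].
Definition setmul (A B : {fset G}) : {fset G} := [fset a * b | a in A, b in B].
Definition setinv (A : {fset G}) : {fset G} := [fset a^-1 | a in A].

(* a set system on G, given as a predicate on finite subsets (all members of
   the systems considered here are finite) *)
Definition shatters (F : {fset G} -> Prop) (Y : {fset G}) : Prop :=
  forall Z : {fset G}, Z `<=` Y -> exists2 S, F S & Y `&` S = Z.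

Definition VCdim (F : {fset G} -> Prop) (n : nat) : Prop :=
  (exists2 Y : {fset G}, shatters F Y & #|` Y| = n) /\
  (forall Y : {fset G}, shatters F Y -> (#|` Y| <= n)%N).

Definition VCl (B A : {fset G}) (n : nat) : Prop :=
  VCdim (fun S => exists2 x, x \in B & S = lmul x A) n.
Definition VCr (B A : {fset G}) (n : nat) : Prop :=
  VCdim (fun S => exists2 x, x \in B & S = rmul A x) n.

Definition is_subgroup (H : G -> Prop) : Prop :=
  H 1 /\ (forall x y, H x -> H y -> H (x * y)) /\ (forall x, H x -> H x^-1).

Definition is_lcoset (A : {fset G}) (a : G) (H : G -> Prop) : Prop :=
  forall x, x \in A <-> exists2 h, H h & x = a * h.

Definition lcoset_eq_rcoset (a : G) (H : G -> Prop) : Prop :=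
  forall x, (exists2 h, H h & x = a * h) <-> (exists2 h, H h & x = h * a).
End Defs.

(* Main.v *)
Require Import Defs.
From HB Require Import structures.
From mathcomp Require Import all_boot.
From mathcomp Require Import finmap.
Local Open Scope fset_scope.
Local Open Scope group_scope.

Set Implicit Arguments.
Section Aux.
Variable G : groupType.
Implicit Types A B U : {fset G}.

Definition Pf (B : {fset G}) (f : G -> {fset G}) :=
  forall x y, x \in B -> y \in B -> forall z, z \in f x -> z \in f y.

Lemma VC0P B (f : G -> {fset G}) : B != fset0 ->
  VCdim (fun S => exists2 x, x \in B & S = f x) 0 <-> Pf B f.
Proof.
move=> hB; split.
- case=> _ Hle x y xB yB z zx; apply/negPn/negP => zy.
  have : shatters (fun S => exists2 x, x \in B & S = f x) [fset z].
    move=> Z; rewrite fsubset1 => /orP [/eqP -> | /eqP ->].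
      exists (f x); first by exists x.
      by apply/fsetIidPl; rewrite fsub1set.
    exists (f y); first by exists y.
    apply/fsetP => w; rewrite in_fsetI in_fset1 in_fset0.
    by case: eqP => // ->; exact/negbTE.
  by move/Hle; rewrite cardfs1.
- move=> HP; split.
    exists fset0; last by rewrite cardfs0.
    move=> Z; rewrite fsubset0 => /eqP ->.
    case/fset0Pn: hB => x xB; exists (f x); first by exists x.
    by rewrite fset0I.
  move=> Y HY; case: (fset_0Vmem Y) => [-> | [y yY]]; first by rewrite cardfs0.
  exfalso.
  have [S [x xB ->] HS1] := HY Y (fsubset_refl Y).
  have [S' [x' xB' ->] HS2] := HY (Y `\ y) (fsubD1set Y y).
  have yx : y \in f x by move: yY; rewrite -HS1 in_fsetI => /andP[].
  have yx' := HP _ _ xB xB' _ yx.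
  have : y \in Y `&` f x' by rewrite in_fsetI yY yx'.
  by rewrite HS2 in_fsetD1 eqxx.
Qed.

Lemma card_union B A U (f : G -> {fset G}) : B != fset0 ->
  (forall x, x \in B -> f x `<=` U) ->
  (forall z, z \in U -> exists2 x, x \in B & z \in f x) ->
  (forall x, x \in B -> #|` f x| = #|` A|) ->
  (#|` U| = #|` A| <-> Pf B f).
Proof.
move=> hB hsub hcov hcard; split.
- move=> hU x y xB yB z zx.
  have e : forall w, w \in B -> f w = U.
    by move=> w wB; apply/eqP; rewrite eqEfcard hsub //= hcard // hU.
  by rewrite e // -(e x).
- move=> HP; case/fset0Pn: hB => x0 x0B.
  have -> : U = f x0.
    apply/eqP; rewrite eqEfsubset (hsub _ x0B) andbT.
    apply/fsubsetP => z /hcov [x xB zx]; exact: HP _ _ xB x0B _ zx.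
  exact: hcard.
Qed.

Lemma card_lmul x A : #|` lmul x A| = #|` A|.
Proof. rewrite /lmul card_imfset //=; last exact: mulgI. Qed.

Lemma card_rmul x A : #|` rmul A x| = #|` A|.
Proof. rewrite /rmul card_imfset //=; last exact: mulIg. Qed.

Lemma mem_lmul z y A : (z \in lmul y A) = (y^-1 * z \in A).
Proof.
apply/imfsetP/idP => [[a aA ->]|h]; first by rewrite mulKg.
by exists (y^-1 * z) => //; rewrite mulVKg.
Qed.

Lemma mem_rmul z y A : (z \in rmul A y) = (z * y^-1 \in A).
Proof.
apply/imfsetP/idP => [[a aA ->]|h]; first by rewrite mulgK.
by exists (z * y^-1) => //; rewrite mulgVK.
Qed.

Lemma mem_setinv x A : (x \in setinv A) = (x^-1 \in A).
Proof.
apply/imfsetP/idP => [[a aA ->]|h]; first by rewrite invgK.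
by exists x^-1 => //; rewrite invgK.
Qed.

Lemma VCl0P B A : B != fset0 -> VCl B A 0 <-> Pf B (fun x => lmul x A).
Proof. exact: VC0P. Qed.

Lemma VCr0P B A : B != fset0 -> VCr B A 0 <-> Pf B (fun x => rmul A x).
Proof. exact: VC0P. Qed.

Lemma cardlP B A : B != fset0 ->
  #|` setmul B A| = #|` A| <-> Pf B (fun x => lmul x A).
Proof.
move=> hB; apply: card_union => //.
- move=> x xB; apply/fsubsetP => z /imfsetP [a aA ->].
  by apply/imfset2P; exists x => //; exists a.
- move=> z /imfset2P [x xB [a aA ->]]; exists x => //.
  by apply/imfsetP; exists a.
- by move=> x _; apply: card_lmul.
Qed.

Lemma cardrP B A : B != fset0 ->
  #|` setmul A B| = #|` A| <-> Pf B (fun x => rmul A x).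
Proof.
move=> hB; apply: card_union => //.
- move=> x xB; apply/fsubsetP => z /imfsetP [a aA ->].
  by apply/imfset2P; exists a => //; exists x.
- move=> z /imfset2P [a aA [x xB ->]]; exists x => //.
  by apply/imfsetP; exists a.
- by move=> x _; apply: card_rmul.
Qed.

End Aux.

Ltac gsimpl := rewrite ?(invgM, invgK, mulgA, mulgK, mulgVK, mulVg, mulgV, mul1g, mulg1).

Section Grp.
Variable G : groupType.
Implicit Types A B : {fset G}.

Definition Q A := forall a b c : G, a \in A -> b \in A -> c \in A -> a * b^-1 * c \in A.

Lemma PlinvQ A : Pf (setinv A) (fun x => lmul x A) <-> Q A.
Proof.
rewrite /Pf; split.
- move=> HP a b c aA bA cA.
  have := HP b^-1 a^-1; rewrite !mem_setinv !invgK => /(_ bA aA (b^-1 * c)).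
  by rewrite !mem_lmul !invgK mulVKg mulgA; apply.
- move=> HQ x y; rewrite !mem_setinv => xA yA z; rewrite !mem_lmul => h.
  have := HQ _ _ _ yA xA h.
  have -> : y^-1 * x^-1^-1 * (x^-1 * z) = y^-1 * z by gsimpl.
  by [].
Qed.

Lemma PrinvQ A : Pf (setinv A) (fun x => rmul A x) <-> Q A.
Proof.
rewrite /Pf; split.
- move=> HP a b c aA bA cA.
  have := HP b^-1 c^-1; rewrite !mem_setinv !invgK => /(_ bA cA (a * b^-1)).
  by rewrite !mem_rmul !invgK mulgVK; apply.
- move=> HQ x y; rewrite !mem_setinv => xA yA z; rewrite !mem_rmul => h.
  have := HQ _ _ _ h xA yA.
  by rewrite invgK mulgVK.
Qed.

Lemma Qcoset A a0 : a0 \in A -> Q A ->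
  is_subgroup (fun y => a0 * y \in A) /\ is_lcoset A a0 (fun y => a0 * y \in A).
Proof.
move=> a0A HQ; split; first split; [by rewrite mulg1 | split |].
- move=> y z hy hz; have := HQ _ _ _ hy a0A hz.
  by have -> : a0 * y * a0^-1 * (a0 * z) = a0 * (y * z) by gsimpl.
- move=> y hy; have := HQ _ _ _ a0A hy a0A.
  by have -> : a0 * (a0 * y)^-1 * a0 = a0 * y^-1 by gsimpl.
- move=> x; split => [xA | [h hh ->]] //.
  by exists (a0^-1 * x); rewrite mulVKg.
Qed.

Lemma memc A a (H : G -> Prop) : is_lcoset A a H ->
  forall w, w \in A <-> H (a^-1 * w).
Proof.
move=> HC w; rewrite HC; split => [[h hh ->]|hw]; first by rewrite mulKg.
by exists (a^-1 * w) => //; rewrite mulVKg.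
Qed.

Lemma cosetQ A (H : G -> Prop) a : is_subgroup H -> is_lcoset A a H -> Q A.
Proof.
move=> [H1 [HM HV]] HC x y z /(memc HC) xA /(memc HC) yA /(memc HC) zA.
apply/(memc HC).
have -> : a^-1 * (x * y^-1 * z) = (a^-1 * x) * (a^-1 * y)^-1 * (a^-1 * z) by gsimpl.

by apply: (HM) => //; apply: (HM) => //; apply: (HV).
Qed.

Lemma cforward A : A != fset0 -> Pf A (fun x => lmul x A) -> Pf A (fun x => rmul A x) ->
  exists (H : G -> Prop) (a : G),
        [/\ is_subgroup H, is_lcoset A a H & lcoset_eq_rcoset a H].
Proof.
move=> hA Pl Pr.
have PlA : forall x y c, x \in A -> y \in A -> c \in A -> y^-1 * (x * c) \in A.
  move=> x y c xA yA cA; have := Pl x y xA yA (x * c).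
  by rewrite !mem_lmul mulKg; apply.
have PrA : forall x y c, x \in A -> y \in A -> c \in A -> c * x * y^-1 \in A.
  move=> x y c xA yA cA; have := Pr x y xA yA (c * x).
  by rewrite !mem_rmul mulgK; apply.
have HQ : Q A.
  move=> a b c aA bA cA.
  have dA := PlA c b b cA bA bA.
  have := PrA _ _ a dA bA aA.
  by have -> : a * (b^-1 * (c * b)) * b^-1 = a * b^-1 * c by gsimpl.
case/fset0Pn: hA => a0 a0A.
have [HS HC] := @Qcoset A a0 a0A HQ.
exists (fun y => a0 * y \in A), a0; split => //.
move=> x; split => [[h hh ->]|[h hh ->]].
- exists (a0 * h * a0^-1); last by rewrite mulgVK.
  have := PrA _ _ a0 hh a0A a0A.
  by have -> : a0 * (a0 * h) * a0^-1 = a0 * (a0 * h * a0^-1) by gsimpl.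
- exists (a0^-1 * h * a0).
    have := PlA _ _ a0 hh a0A a0A.
    by have -> : a0^-1 * (a0 * h * a0) = a0 * (a0^-1 * h * a0) by gsimpl.
  by gsimpl.
Qed.

Lemma cbackward A (H : G -> Prop) a :
  [/\ is_subgroup H, is_lcoset A a H & lcoset_eq_rcoset a H] ->
  Pf A (fun x => lmul x A).
Proof.
move=> [[H1 [HM HV]] HC HN] x y /(memc HC) hx /(memc HC) hy z.
rewrite !mem_lmul => /(memc HC) hz; apply/(memc HC).
have N1 : forall h, H h -> H (a^-1 * h * a).
  move=> h hh; have [h' hh' e] : exists2 h', H h' & h * a = a * h'.
    by apply/HN; exists h.
  by rewrite -mulgA e mulKg.
have -> : a^-1 * (y^-1 * z) =
  (a^-1 * ((a^-1 * y)^-1 * (a^-1 * x)) * a) * (a^-1 * (x^-1 * z)) by gsimpl.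
by apply: (HM) => //; apply: (N1); apply: (HM) => //; apply: (HV).
Qed.

End Grp.

Unset Implicit Arguments.

Theorem proposition2p19 (G : groupType) (A : {fset G}) (hA : A != fset0) :
  (* (a) *)
  (forall B : {fset G}, B != fset0 ->
     (VCl B A 0 <-> #|` setmul B A| = #|` A|) /\
     (VCr B A 0 <-> #|` setmul A B| = #|` A|)) /\
  (* (b) *)
  ((VCl (setinv A) A 0 <-> VCr (setinv A) A 0) /\
   (VCl (setinv A) A 0 <-> #|` setmul A (setinv A)| = #|` A|) /\
   (VCl (setinv A) A 0 <-> #|` setmul (setinv A) A| = #|` A|) /\
   (VCl (setinv A) A 0 <->
      exists (H : G -> Prop) (a : G), is_subgroup H /\ is_lcoset A a H)) /\
  (* (c) *)
  ((VCl A A 0 <-> VCr A A 0) /\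
   (VCl A A 0 <-> #|` setmul A A| = #|` A|) /\
   (VCl A A 0 <->
      exists (H : G -> Prop) (a : G),
        [/\ is_subgroup H, is_lcoset A a H & lcoset_eq_rcoset a H])).
Proof.
split.
  move=> B hB; split.
    exact: iff_trans (VCl0P B A hB) (iff_sym (cardlP B A hB)).
  exact: iff_trans (VCr0P B A hB) (iff_sym (cardrP B A hB)).
have hAi : setinv A != fset0.
  case/fset0Pn: hA => a aA; apply/fset0Pn; exists a^-1.
  by rewrite mem_setinv invgK.
split.
  have hL := iff_trans (VCl0P (setinv A) A hAi) (PlinvQ A).
  have hR := iff_trans (VCr0P (setinv A) A hAi) (PrinvQ A).
  have c1 := iff_trans (cardrP (setinv A) A hAi) (PrinvQ A).
  have c2 := iff_trans (cardlP (setinv A) A hAi) (PlinvQ A).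
  have hC : Q A <-> exists (H : G -> Prop) (a : G), is_subgroup H /\ is_lcoset A a H.
    split.
      move=> HQ; case/fset0Pn: (hA) => a0 a0A.
      by exists (fun y => a0 * y \in A), a0; apply: Qcoset.
    by case=> H [a [HS HC]]; apply: cosetQ HS HC.
  split; first exact: iff_trans hL (iff_sym hR).
  split; first exact: iff_trans hL (iff_sym c1).
  split; first exact: iff_trans hL (iff_sym c2).
  exact: iff_trans hL hC.
have hL := iff_trans (VCl0P A A hA) (iff_sym (cardlP A A hA)).
have hR := iff_trans (VCr0P A A hA) (iff_sym (cardrP A A hA)).
split; first exact: iff_trans hL (iff_sym hR).
split; first exact: hL.
split.
  move=> h; apply: cforward => //.
    exact/(VCl0P A A hA).
  by apply/(VCr0P A A hA); apply/hR/hL.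
by case=> H [a hc]; apply/(VCl0P A A hA); apply: cbackward hc.
Qed.
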